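(* Let $F$ be a forest and let $\ell(F)$ be the length (number of edges) of a longest path in $F$. Then $\chi_{\mathrm{g}}(F)=2$ if and only if either $1\le \ell(F)\le 2$, or $\ell(F)=3$, $|V(F)|$ is odd, and every component of $F$ with diameter $3$ is a path.
   Context: The $t$-coloring game on a finite graph $G$ with a set $C$ of $t$ colors: Alice and Bob alternate turns, Alice first, each coloring an uncolored vertex with a color from $C$ that is legal (not used on any neighbor of the vertex). Bob wins if at some point an uncolored vertex has no legal color available; otherwise Alice wins when all vertices are colored. The game chromatic number $\chi_{\mathrm{g}}(G)$ is the least $t$ such that Alice has a winning strategy in the $t$-coloring game on the initially uncolored graph $G$. *)

(* Defs.v *)
From mathcomp Require Import all_boot.
Set Implicit Arguments. Unset Strict Implicit. Unset Printing Implicit Defensive.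

(* A finite simple graph: vertex type T : finType, adjacency e : rel T,
   assumed symmetric and irreflexive (hypotheses of the theorem). *)

(* partial colorings with colors 'I_t ; None = uncolored *)
Definition pcol (T : finType) (t : nat) := {ffun T -> option 'I_t}.

Definition legal (T : finType) (e : rel T) t (c : pcol T t) (v : T) (k : 'I_t) : bool :=
  (c v == None) && [forall u, e v u ==> (c u != Some k)].

(* some uncolored vertex has no legal color: Bob has won *)
Definition stuck (T : finType) (e : rel T) t (c : pcol T t) : bool :=
  [exists v, (c v == None) && [forall k : 'I_t, ~~ legal e c v k]].

Definition all_colored (T : finType) t (c : pcol T t) : bool :=
  [forall v, c v != None].

Definition recolor (T : finType) t (c : pcol T t) (v : T) (k : 'I_t) : pcol T t :=
  [ffun u => if u == v then Some k else c u].

(* alice_wins_from e t n a c : Alice has a winning strategy from position c,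
   with at most n moves remaining, a = true iff it is Alice's turn. *)
Fixpoint alice_wins_from (T : finType) (e : rel T) t (n : nat) (a : bool)
    (c : pcol T t) : bool :=
  ~~ stuck e c &&
  (all_colored c ||
   match n with
   | 0 => false
   | n'.+1 =>
     if a then [exists v, exists k : 'I_t,
                 legal e c v k && alice_wins_from e n' false (recolor c v k)]
     else [forall v, forall k : 'I_t,
                 legal e c v k ==> alice_wins_from e n' true (recolor c v k)]
   end).

Definition empty_col (T : finType) t : pcol T t := [ffun => None].

(* Alice (moving first) wins the t-coloring game on the uncolored graph.
   Every move colors one vertex, so #|T| moves suffice. *)
Definition alice_wins (T : finType) (e : rel T) (t : nat) : bool :=
  alice_wins_from e #|T| true (empty_col T t).

Definition game_chromatic_number_is (T : finType) (e : rel T) (t : nat) : Prop :=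
  alice_wins e t /\ forall s, s < t -> ~~ alice_wins e s.

Definition is_forest (T : finType) (e : rel T) : Prop :=
  forall c : seq T, 3 <= size c -> ~ ucycle e c.

Definition has_path_of_length (T : finType) (e : rel T) (k : nat) : Prop :=
  exists (x : T) (p : seq T), [/\ size p = k, path e x p & uniq (x :: p)].

Definition longest_path_length_is (T : finType) (e : rel T) (k : nat) : Prop :=
  has_path_of_length e k /\ forall m, has_path_of_length e m -> m <= k.

Definition dist_le (T : finType) (e : rel T) (u w : T) (d : nat) : Prop :=
  exists p : seq T, [/\ size p <= d, path e u p & last u p = w].

Definition component (T : finType) (e : rel T) (v : T) : {set T} :=
  [set u | connect e v u].

Definition is_component (T : finType) (e : rel T) (C : {set T}) : Prop :=
  exists v, C = component e v.

Definition diameter_is (T : finType) (e : rel T) (C : {set T}) (d : nat) : Prop :=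
  (forall u w, u \in C -> w \in C -> dist_le e u w d) /\
  (exists u w, [/\ u \in C, w \in C & ~ dist_le e u w d.-1]) /\ 0 < d.

Definition induces_path (T : finType) (e : rel T) (C : {set T}) : Prop :=
  exists s : seq T, [/\ uniq s, C =i s &
    forall x y, x \in C -> y \in C ->
      e x y = ((index x s).+1 == index y s) || ((index y s).+1 == index x s)].

(* Main.v *)
Require Import Defs.
From mathcomp Require Import all_boot zify.
From Stdlib Require Classical_Prop.
Set Implicit Arguments. Unset Strict Implicit. Unset Printing Implicit Defensive.

Lemma uniq5 (T : eqType) (a b c d f : T) : uniq [:: a; b; c; d; f] ->
  (a != b) * (a != c) * (a != d) * (a != f) * (b != c) * (b != d) * (b != f) * (c != d) * (c != f) * (d != f).
Proof.
move=> U; repeat split; apply: (contraTneq _ U) => E; subst;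
  by rewrite /= !inE !eqxx /= ?orbT ?andbF.
Qed.

Lemma uniq4 (T : eqType) (a b c d : T) : uniq [:: a; b; c; d] ->
  (a != b) * (a != c) * (a != d) * (b != c) * (b != d) * (c != d).
Proof.
move=> U; repeat split; apply: (contraTneq _ U) => E; subst;
  by rewrite /= !inE !eqxx /= ?orbT ?andbF.
Qed.

Lemma three_nb (a b c d : nat) : (a.+1 == b) || (b.+1 == a) -> (a.+1 == c) || (c.+1 == a) ->
  (a.+1 == d) || (d.+1 == a) -> b != c -> b != d -> c != d -> False.
Proof. lia. Qed.

Definition flip (i : 'I_2) : 'I_2 := if val i == 0 then ord_max else ord0.

Lemma flip_neq i : flip i != i.
Proof. by case: i => [[|[|m]] H] //; rewrite /flip. Qed.

Lemma I2_two (i j k : 'I_2) : i != j -> k = i \/ k = j.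
Proof.
case: i => [[|[|m]] Hi] //; case: j => [[|[|m']] Hj] //; case: k => [[|[|m'']] Hk] //;
  move=> _; (left + right); exact: val_inj.
Qed.

Lemma I2_flip (i k : 'I_2) : k = i \/ k = flip i.
Proof. apply: I2_two; rewrite eq_sym; exact: flip_neq. Qed.

Lemma Sflip (g : 'I_2) : Some g <> Some (flip g).
Proof. by move=> [] E; move: (flip_neq g); rewrite -E eqxx. Qed.

Lemma flip_of (g j : 'I_2) : j != g -> g = flip j.
Proof. by move=> jg; case: (I2_flip j g) => // E; rewrite E eqxx in jg. Qed.

Section Game.
Variable T : finType.
Variable e : rel T.
Variable e_sym : symmetric e.
Variable e_irr : irreflexive e.

Definition unc t (c : pcol T t) := #|[set x | c x == None]|.

Lemma recolorE t (c : pcol T t) v k u : recolor c v k u = if u == v then Some k else c u.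
Proof. by rewrite /recolor ffunE. Qed.

Lemma aw0 t a (c : pcol T t) : alice_wins_from e 0 a c = ~~ stuck e c && all_colored c.
Proof. by rewrite /= orbF. Qed.

Lemma awSt t n (c : pcol T t) : alice_wins_from e n.+1 true c =
  ~~ stuck e c && (all_colored c || [exists v, exists k : 'I_t,
                 legal e c v k && alice_wins_from e n false (recolor c v k)]).
Proof. by []. Qed.

Lemma awSf t n (c : pcol T t) : alice_wins_from e n.+1 false c =
  ~~ stuck e c && (all_colored c || [forall v, forall k : 'I_t,
                 legal e c v k ==> alice_wins_from e n true (recolor c v k)]).
Proof. by []. Qed.

Lemma edge_neq x y : e x y -> x != y.
Proof. by move=> H; apply/eqP => E; subst; rewrite e_irr in H. Qed.

Lemma legalP t (c : pcol T t) v k : 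
  reflect (c v = None /\ forall u, e v u -> c u <> Some k) (legal e c v k).
Proof.
apply: (iffP andP) => [[/eqP -> /forallP H]|[-> H]]; split => //.
- by move=> u evu; move: (H u); rewrite evu /= => /eqP.
- by apply/forallP => u; apply/implyP => evu; apply/eqP; apply: H.
Qed.

Lemma not_all_colored t (c : pcol T t) v : c v = None -> ~~ all_colored c.
Proof. by move=> H; apply/forallPn; exists v; rewrite H. Qed.

Lemma all_coloredP t (c : pcol T t) : ~~ all_colored c -> exists v, c v = None.
Proof. by move/forallPn => [v]; rewrite negbK => /eqP; exists v. Qed.

Lemma unc_recolor t (c : pcol T t) v k : c v = None ->
  unc c = (unc (recolor c v k)).+1.
Proof.
move=> cv; rewrite /unc (cardsD1 v) inE cv eqxx add1n; congr _.+1.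
apply: eq_card => u; rewrite !inE recolorE.
by case: (u =P v).
Qed.

Lemma unc0 t (c : pcol T t) : ~~ all_colored c -> 0 < unc c.
Proof. move/all_coloredP => [v cv]; rewrite /unc card_gt0; apply/set0Pn; exists v; by rewrite inE cv. Qed.

Lemma bob_move t n (c : pcol T t) v k :
  legal e c v k -> ~~ alice_wins_from e n true (recolor c v k) ->
  alice_wins_from e n.+1 false c = false.
Proof.
move=> L W; rewrite awSf; apply/negbTE; rewrite negb_and negb_or; apply/orP; right.
apply/andP; split.
- by move/legalP: L => [cv _]; apply: (not_all_colored cv).
- apply/forallPn; exists v; apply/forallPn; exists k; by rewrite L.
Qed.

Lemma bob_move' t n (c : pcol T t) v k :
  legal e c v k -> ~~ alice_wins_from e n.-1 true (recolor c v k) ->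
  alice_wins_from e n false c = false.
Proof.
case: n => [|n] L W; last exact: (bob_move L W).
rewrite aw0; apply/negbTE; rewrite negb_and; apply/orP; right.
by move/legalP: L => [cv _]; apply: (not_all_colored cv).
Qed.

Lemma alice_lose t n (c : pcol T t) : ~~ all_colored c ->
  (forall v k, legal e c v k -> ~~ alice_wins_from e n.-1 false (recolor c v k)) ->
  alice_wins_from e n true c = false.
Proof.
move=> nac H; case: n H => [|n] H.
  by rewrite aw0 (negbTE nac) andbF.
rewrite awSt (negbTE nac) /=; apply/negbTE; rewrite negb_and; apply/orP; right.
apply/existsPn => v; apply/existsPn => k; rewrite negb_and.
case L: (legal e c v k) => //=; exact: H.
Qed.

Lemma stuck_lose t n a (c : pcol T t) : stuck e c -> alice_wins_from e n a c = false.
Proof. by case: n => [|n]; case: a => /=; move=> ->. Qed.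


Lemma stuck_of (c : pcol T 2) y a b i j : c y = None -> e y a -> e y b ->
  c a = Some i -> c b = Some j -> i != j -> stuck e c.
Proof.
move=> cy ea eb ca cb ij; apply/existsP; exists y; rewrite cy eqxx /=.
apply/forallP => k; apply/negP => /legalP [_ H].
by case: (I2_two k ij) => E; subst k; [exact: (H a) | exact: (H b)].
Qed.

Definition calm (c : pcol T 2) :=
  (forall u z z', c u = None -> e u z -> e u z' -> c z = None -> c z' = None) /\
  (forall u z z' i j, c u = None -> e u z -> e u z' -> c z = Some i -> c z' = Some j -> i = j).

Lemma calm_legal c u : calm c -> c u = None -> exists k, legal e c u k.
Proof.
move=> [C1 C2] cu.
case: (boolP [exists z, e u z && (c z != None)]).
- move/existsP => [z /andP [ez]]; case cz: (c z) => [i|] // _.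
  exists (flip i); apply/legalP; split => // z' ez' cz'.
  have := C2 _ _ _ _ _ cu ez ez' cz cz' => E.
  by move: (flip_neq i); rewrite -E eqxx.
- move/existsPn => H; exists ord0; apply/legalP; split => // z ez.
  by move: (H z); rewrite ez /= negbK => /eqP ->.
Qed.

Lemma calm_notstuck c : calm c -> ~~ stuck e c.
Proof.
move=> C; apply/existsPn => u; rewrite negb_and.
case cu: (c u) => [k|] //=; rewrite negb_forall.
have [k Hk] := calm_legal C cu; apply/existsP; exists k; by rewrite negbK.
Qed.

Lemma calm_of (c c' : pcol T 2) : calm c ->
  (forall u, c' u = None -> (c u = None /\ forall z, e u z -> c' z = c z) \/
                            (exists i, forall z, e u z -> c' z = Some i)) ->
  calm c'.
Proof.
move=> [C1 C2] H; split.
- move=> u z z' cu ez ez' cz; case: (H u cu) => [[cu0 Hz]|[i Hi]].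
  + by rewrite Hz //; apply: (C1 u z) => //; rewrite -Hz.
  + by rewrite (Hi z) in cz.
- move=> u z z' i j cu ez ez' cz cz'; case: (H u cu) => [[cu0 Hz]|[k Hk]].
  + rewrite Hz // in cz; rewrite Hz // in cz'; exact: (C2 u z z').
  + by move: cz cz'; rewrite (Hk z) // (Hk z') // => -[<-] -[<-].
Qed.

Definition CalmLike (c : pcol T 2) x :=
  forall y, e x y -> c y = None -> forall z, e y z -> z = x.

Lemma calm_recolor c x k : calm c -> CalmLike c x -> legal e c x k ->
  calm (recolor c x k).
Proof.
move=> C CL /legalP [cx _]; apply: (calm_of C) => u; rewrite recolorE.
case: (u =P x) => // ux cu.
case: (boolP (e u x)) => eux.
- right; exists k => z ez; rewrite recolorE.
  by rewrite (CL u _ cu z ez) ?eqxx // e_sym.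
- left; split => // z ez; rewrite recolorE.
  case: (z =P x) => // zx; by subst; rewrite ez in eux.
Qed.


Definition CalmLikeb (c : pcol T 2) x :=
  [forall y, e x y ==> (c y == None) ==> [forall z, e y z ==> (z == x)]].

Lemma CalmLikeP c x : reflect (CalmLike c x) (CalmLikeb c x).
Proof.
apply: (iffP forallP) => [H y exy cy z eyz|H y].
- by move: (H y); rewrite exy cy eqxx /= => /forallP /(_ z); rewrite eyz => /eqP.
- apply/implyP => exy; apply/implyP => /eqP cy; apply/forallP => z; apply/implyP => eyz.
  by rewrite (H y exy cy z eyz).
Qed.

Lemma notCL c x : ~~ CalmLikeb c x -> exists y z, [/\ e x y, c y = None, e y z & z != x].
Proof.
move/forallPn => [y]; rewrite !negb_imply => /and3P [exy /eqP cy /forallPn [z]].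
by rewrite negb_imply => /andP [eyz zx]; exists y, z.
Qed.

Variable F_forest : is_forest e.

Lemma no_cycle x s : 2 <= size s -> uniq (x :: s) -> path e x s -> e (last x s) x -> False.
Proof.
move=> sz u p l; apply: (F_forest (c := x :: s)) => //.
by rewrite /ucycle u andbT /cycle rcons_path p l.
Qed.

Ltac es := try done; try (by rewrite e_sym); try (by rewrite eq_sym).
Ltac neqs := repeat (apply/andP; split); try done; try (by rewrite eq_sym).

Lemma cyc3 a b c : e a b -> e b c -> e c a -> False.
Proof.
move=> ab bc ca; apply: (no_cycle (x := a) (s := [:: b; c])) => //=; last by rewrite ab bc.
have := edge_neq ab; have := edge_neq bc; have := edge_neq ca => *.
rewrite !inE !negb_or; neqs.
Qed.

Lemma cyc4 a b c d : e a b -> e b c -> e c d -> e d a -> a != c -> b != d -> False.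
Proof.
move=> ab bc cd da ac bd; apply: (no_cycle (x := a) (s := [:: b; c; d])) => //=; last by rewrite ab bc cd.
have := edge_neq ab; have := edge_neq bc; have := edge_neq cd; have := edge_neq da => *.
rewrite !inE !negb_or; neqs.
Qed.

Lemma cyc5 a b c d f : e a b -> e b c -> e c d -> e d f -> e f a -> uniq [:: a; b; c; d; f] -> False.
Proof.
move=> ab bc cd df fa u; apply: (no_cycle (x := a) (s := [:: b; c; d; f])) => //=.
by rewrite ab bc cd df.
Qed.

Definition noP4 := forall a b c d f, e a b -> e b c -> e c d -> e d f ->
  uniq [:: a; b; c; d; f] -> False.
Definition noP3 := forall a b c d, e a b -> e b c -> e c d -> uniq [:: a; b; c; d] -> False.
Definition noBDS := forall y w x1 x2 w', e y w -> e y x1 -> e y x2 -> e w w' ->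
  x1 != x2 -> x1 != w -> x2 != w -> w' != y -> False.


Lemma alice_fix (H4 : noP4) (NB : noBDS) c x' k' : calm c -> legal e c x' k' ->
  ~~ CalmLikeb c x' ->
  exists x k, legal e (recolor c x' k') x k /\ calm (recolor (recolor c x' k') x k).
Proof.
move=> C L /notCL [y [z [exy cy eyz zx]]].
have [cx' _] := legalP _ _ _ L.
have Cfresh : forall t, e y t -> c t = None.
  by move=> t eyt; apply: (C.1 y x' t) => //; rewrite e_sym.
have x'y := edge_neq exy; have yz := edge_neq eyz.
case: (boolP [exists w, exists w', [&& e y w, w != x', e w w' & w' != y]]).
- move/existsP => [w /existsP [w' /and4P [eyw wx ew'w w'y]]].
  have yw := edge_neq eyw; have ww' := edge_neq ew'w.
  have x'w' : x' != w'.
    by apply/eqP => E; subst w'; apply: (cyc3 exy eyw ew'w).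
  have x'leaf : forall v, e x' v -> v = y.
    move=> v ex'v; apply/eqP; apply/negP => /negP vy.
    have vx' := edge_neq ex'v.
    have vw : v != w by apply/eqP => E; subst v; apply: (cyc3 exy eyw); rewrite e_sym.
    have vw' : v != w'.
      apply/eqP => E; subst v; apply: (cyc4 exy eyw ew'w); es.
    apply: (H4 v x' y w w') => //; first by rewrite e_sym.
    rewrite /= !inE !negb_or; neqs.
  have yonly : forall v, e y v -> v = x' \/ v = w.
    move=> v eyv; case: (v =P x') => [|/eqP vx']; first by left.
    case: (v =P w) => [|/eqP vw]; first by right.
    exfalso; apply: (NB y w x' v w') => //; es.
  have wleaves : forall v s, e w v -> v != y -> e v s -> s = w.
    move=> v s ewv vy evs; apply/eqP; apply/negP => /negP sw.
    have sv := edge_neq evs.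
    have sy : s != y.
      by apply/eqP => E; subst s; apply: (cyc3 (a := v) (b := w) (c := y)); es.
    have sx' : s != x'.
      apply/eqP => E; subst s; apply: (cyc4 (a := x') (b := v) (c := w) (d := y)); es.
    have vw := edge_neq ewv.
    have vx' : v != x'.
      by apply/eqP => E; subst v; apply: (cyc3 exy eyw).
    apply: (H4 s v w y x'); es.
    rewrite /= !inE !negb_or; neqs.
  have wfresh : forall t, e w t -> c t = None.
    by move=> t ewt; apply: (C.1 w y t) => //; try exact: Cfresh; es.
  exists w, k'; split.
  + apply/legalP; split; first by rewrite recolorE (negbTE wx) Cfresh.
    move=> t ewt; rewrite recolorE; case: (t =P x') => [E|_].
      by subst t; exfalso; apply: (cyc3 exy eyw).
    by rewrite wfresh.
  + apply: (calm_of C) => u; rewrite !recolorE.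
    case: (u =P w) => // uw; case: (u =P x') => // ux cu.
    case: (u =P y) => [->|uy].
      right; exists k' => t eyt; rewrite !recolorE.
      by case: (yonly t eyt) => ->; rewrite ?eqxx //; case: ifP.
    case: (boolP (e u w)) => euw.
      right; exists k' => t eut; rewrite !recolorE.
      rewrite (wleaves u t) ?eqxx //; [by rewrite e_sym | by apply/eqP].
    case: (boolP (e u x')) => eux.
      by exfalso; apply: uy; apply: x'leaf; rewrite e_sym.
    left; split => // t eut; rewrite !recolorE.
    case: (t =P w) => [E|_]; first by subst t; rewrite eut in euw.
    case: (t =P x') => [E|_]; first by subst t; rewrite eut in eux.
    done.
- move/existsPn => HA'.
  have HA : forall w w', e y w -> w != x' -> e w w' -> w' = y.
    move=> w w' eyw wx ew'; apply/eqP; move: (HA' w) => /existsPn /(_ w').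
    by rewrite eyw wx ew' /= => /negbNE.
  exists y, (flip k'); split.
  + apply/legalP; split; first by rewrite recolorE eq_sym (negbTE x'y).
    move=> t eyt; rewrite recolorE; case: (t =P x') => [_|_].
      by move=> [] /eqP; rewrite eq_sym (negbTE (flip_neq k')).
    by rewrite Cfresh.
  + apply: (calm_of C) => u; rewrite !recolorE.
    case: (u =P y) => // uy; case: (u =P x') => // ux cu.
    case: (boolP (e u y)) => euy.
      right; exists (flip k') => t eut; rewrite !recolorE.
      rewrite (HA u t) ?eqxx //; [by rewrite e_sym | by apply/eqP].
    case: (boolP (e u x')) => eux.
      right; exists k' => t eut; rewrite !recolorE.
      have tx' : t = x'.
        apply/eqP; apply/negP => /negP tx'.
        have tu := edge_neq eut.
        have ty : t != y by apply/eqP => E; subst t; rewrite eut in euy.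
        have tz : t != z.
          apply/eqP => E; subst t; apply: (cyc4 eux exy eyz); es; by apply/eqP.
        have uz : u != z by apply/eqP => E; subst u; rewrite e_sym eyz in euy.
        have ux' : u != x' by apply/eqP.
        have uy' : u != y by apply/eqP.
        apply: (H4 t u x' y z); es.
        rewrite /= !inE !negb_or; neqs.
      by subst t; rewrite (negbTE x'y) eqxx.
    left; split => // t eut; rewrite !recolorE.
    case: (t =P y) => [E|_]; first by subst t; rewrite eut in euy.
    case: (t =P x') => [E|_]; first by subst t; rewrite eut in eux.
    done.
Qed.


Definition leafb x := [forall a, forall b, e x a ==> e x b ==> (a == b)].

Lemma leafP x : reflect (forall a b, e x a -> e x b -> a = b) (leafb x).
Proof.
apply: (iffP forallP) => [H a b ea eb|H a].
- by move: (H a) => /forallP /(_ b); rewrite ea eb => /eqP.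
- apply/forallP => b; apply/implyP => ea; apply/implyP => eb; by rewrite (H a b).
Qed.

Definition gnb x := odflt x [pick a | e x a].

Lemma gnbP x a : e x a -> leafb x -> gnb x = a.
Proof.
move=> ea /leafP L; rewrite /gnb; case: pickP => [a' ea'|H] /=.
- exact: L.
- by move: (H a); rewrite ea.
Qed.

Lemma calm_move_exists (H4 : noP4) (NB : noBDS) c : calm c -> ~~ all_colored c ->
  (noP3 \/ odd (unc c)) -> exists x, c x = None /\ CalmLikeb c x.
Proof.
move=> C nac PC.
case: (boolP [exists x, (c x == None) && CalmLikeb c x]).
  by move/existsP => [x /andP [/eqP cx cl]]; exists x.
move/existsPn => HN.
have NC : forall x, c x = None -> exists y z, [/\ e x y, c y = None, e y z & z != x].
  by move=> x cx; apply: notCL; move: (HN x); rewrite cx eqxx.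
case: PC => [P3|odU].
- exfalso; have [x cx] := all_coloredP nac.
  have [y [z [exy cy eyz zx]]] := NC x cx.
  have [y' [z' [eyy' cy' ey'z' z'y]]] := NC y cy.
  have xy := edge_neq exy; have yz := edge_neq eyz; have yy' := edge_neq eyy'.
  have y'z' := edge_neq ey'z'.
  case: (y' =P x) => [E|/eqP y'x].
  + subst y'.
    have z'z : z' != z.
      by apply/eqP => E; subst z'; apply: (cyc3 exy eyz); rewrite e_sym.
    apply: (P3 z' x y z); es.
    rewrite /= !inE !negb_or; neqs.
  + have xz' : x != z'.
      by apply/eqP => E; subst z'; apply: (cyc3 exy eyy').
    apply: (P3 x y y' z'); es.
    rewrite /= !inE !negb_or; neqs.
- set U := [set x | c x == None].
  set L := [set x | leafb x].
  have NCU : forall x, x \in U -> exists y z, [/\ e x y, y \in U, e y z & z != x].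
    move=> x; rewrite inE => /eqP /NC [y [z [exy cy eyz zx]]].
    by exists y, z; rewrite inE cy.
  have inj : {in U :&: L &, injective gnb}.
    move=> x1 x2; rewrite !inE => /andP [cx1 l1] /andP [cx2 l2] E.
    apply/eqP; apply/negP => /negP x12.
    have [y1 [z1 [ex1 cy1 _ _]]] := NC x1 (eqP cx1).
    have [y2 [z2 [ex2 cy2 _ _]]] := NC x2 (eqP cx2).
    rewrite (gnbP ex1 l1) (gnbP ex2 l2) in E; subst y2.
    have [w [w' [eyw cw eww' w'y]]] := NC y1 cy1.
    have wx : forall x, x \in L -> e x y1 -> w != x.
      move=> x; rewrite inE => /leafP lx exy; apply/eqP => E; subst w.
      by move: w'y; rewrite (lx w' y1) ?eqxx // e_sym.
    apply: (NB y1 w x1 x2 w') => //; try (by rewrite e_sym); try (by rewrite eq_sym).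
    by rewrite eq_sym wx // inE.
    by rewrite eq_sym wx // inE.
  have img : gnb @: (U :&: L) = U :\: L.
    apply/eqP; rewrite eqEsubset; apply/andP; split.
    + apply/subsetP => y /imsetP [x]; rewrite !inE => /andP [cx lx] ->.
      have [y' [z [exy' cy' ey'z zx]]] := NC x (eqP cx).
      rewrite (gnbP exy' lx) cy' andbT.
      apply/leafP => LL; move/eqP: zx; apply.
      by apply: (LL z x) => //; rewrite e_sym.
    + apply/subsetP => y; rewrite !inE => /andP [nly cy].
      have [w [w' [eyw cw eww' w'y]]] := NC y (eqP cy).
      have [x [exw yx]] : exists x, e y x /\ x != w.
        move/leafP: nly => nly.
        case: (boolP [exists a, exists b, [&& e y a, e y b & a != b]]).
          move/existsP => [a /existsP [b /and3P [ea eb ab]]].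
          case: (a =P w) => [E|/eqP aw]; last by exists a.
          by subst a; exists b; rewrite eq_sym.
        move/existsPn => H; exfalso; apply: nly => a b ea eb.
        by apply/eqP; move: (H a) => /existsPn /(_ b); rewrite ea eb /= negbK.
      have lx : leafb x.
        apply/leafP => a b ea eb.
        have key : forall s, e x s -> s = y.
          move=> s exs; apply/eqP; apply/negP => /negP sy.
          have sx := edge_neq exs.
          have xy := edge_neq exw; have yw := edge_neq eyw; have ww' := edge_neq eww'.
          have sw : s != w.
            by apply/eqP => E; subst s; apply: (cyc3 exw exs); rewrite e_sym.
          have sw' : s != w'.
            apply/eqP => E; subst s; apply: (cyc4 (a := x) (b := y) (c := w) (d := w')); es.
          have xw' : x != w'.
            apply/eqP => E; subst w'; apply: (cyc3 (a := y) (b := x) (c := w)); es.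
          apply: (H4 s x y w w'); es.
          rewrite /= !inE !negb_or; neqs.
        by rewrite (key a) // (key b).
      apply/imsetP; exists x; last by rewrite (gnbP (a := y) _ lx) // e_sym.
      rewrite !inE lx andbT.
      by apply/eqP; apply: (C.1 y w x (eqP cy)).
  have := cardsID L U; rewrite -img card_in_imset // => E.
  by move: odU; rewrite /unc -/U -E addnn odd_double.
Qed.


Lemma all_colored_unc t (c : pcol T t) : all_colored c = (unc c == 0).
Proof.
case: (boolP (all_colored c)) => H.
- apply/esym/eqP; rewrite /unc; apply/eqP; rewrite cards_eq0; apply/eqP/setP => v.
  rewrite inE in_set0; move/forallP: H => /(_ v); by case: (c v).
- by have := unc0 H; case: (unc c).
Qed.

Lemma bob_notstuck c x' k' : calm c -> legal e c x' k' -> ~~ stuck e (recolor c x' k').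
Proof.
move=> C L; have [cx' _] := legalP _ _ _ L.
apply/existsPn => u; rewrite negb_and recolorE.
case: (u =P x') => // ux; case cu: (c u) => [k|] //=; rewrite negb_forall.
apply/existsP; case: (boolP (e u x')) => eux.
- exists (flip k'); rewrite negbK; apply/legalP; split; first by rewrite recolorE; case: (u =P x').
  move=> t eut; rewrite recolorE; case: (t =P x') => [_ [] /eqP|tx].
    by rewrite eq_sym (negbTE (flip_neq k')).
  by rewrite (C.1 u x' t).
- have [k Hk] := calm_legal C cu; exists k; rewrite negbK.
  move/legalP: Hk => [_ Hk]; apply/legalP; split; first by rewrite recolorE; case: (u =P x').
  move=> t eut; rewrite recolorE; case: (t =P x') => [E|_]; last exact: Hk.
  by subst t; rewrite eut in eux.
Qed.

Lemma alice_main (H4 : noP4) (NB : noBDS) : forall N n c, n <= N -> calm c -> unc c <= n ->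
  (noP3 \/ ~~ odd (unc c)) -> alice_wins_from e n false c.
Proof.
elim=> [|N IH] n c nN C uc PC.
  rewrite leqn0 in nN; move/eqP: nN => ?; subst n.
  by rewrite aw0 (calm_notstuck C) all_colored_unc /= -leqn0.
case: n nN uc => [|n] nN uc.
  by rewrite aw0 (calm_notstuck C) all_colored_unc /=; rewrite leqn0 in uc.
rewrite awSf (calm_notstuck C) /=; apply/orP; right.
apply/forallP => x'; apply/forallP => k'; apply/implyP => L.
have [cx' _] := legalP _ _ _ L.
set c2 := recolor c x' k'.
have u2 := unc_recolor k' cx'; rewrite -/c2 in u2.
have ns2 := bob_notstuck C L; rewrite -/c2 in ns2.
case: n nN uc => [|n] nN uc.
  rewrite aw0 ns2 all_colored_unc /=; by rewrite u2 ltnS leqn0 in uc.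
rewrite awSt ns2 /=; case: (boolP (all_colored c2)) => //= nac2.
have [x [k [L2 C3]]] : exists x k, legal e c2 x k /\ calm (recolor c2 x k).
  case: (boolP (CalmLikeb c x')) => cl.
  - have C2 : calm c2 by apply: calm_recolor => //; apply/CalmLikeP.
    have PC2 : noP3 \/ odd (unc c2).
      by case: PC => [?|od]; [left | right; move: od; rewrite u2 /= negbK].
    have [x [cx clx]] := calm_move_exists H4 NB C2 nac2 PC2.
    have [k Lk] := calm_legal C2 cx.
    exists x, k; split => //; apply: calm_recolor => //; exact/CalmLikeP.
  - exact: alice_fix.
apply/existsP; exists x; apply/existsP; exists k; rewrite L2 /=.
have [cx _] := legalP _ _ _ L2.
have u3 := unc_recolor k cx.
apply: (IH n) => //.
- by move: nN; rewrite !ltnS; apply: leq_trans.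
- by move: uc; rewrite u2 u3 !ltnS.
- by case: PC => [?|od]; [left | right; move: od; rewrite u2 u3 /= negbK].
Qed.

Lemma alice_wins2 (H4 : noP4) (NB : noBDS) : noP3 \/ odd #|T| -> alice_wins e 2.
Proof.
move=> PC.
have ue : unc (empty_col T 2) = #|T|.
  by rewrite /unc; apply: eq_card => v; rewrite !inE ffunE.
have Ce : calm (empty_col T 2).
  by split => [u z z' _ _ _ _| u z z' i j _ _ _]; rewrite ffunE.
rewrite /alice_wins; case E: #|T| => [|n].
  by rewrite aw0 (calm_notstuck Ce) all_colored_unc ue E.
rewrite awSt (calm_notstuck Ce) /=; apply/orP; right.
have nac : ~~ all_colored (empty_col T 2) by rewrite all_colored_unc ue E.
have PC' : noP3 \/ odd (unc (empty_col T 2)) by rewrite ue.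
have [x [cx clx]] := calm_move_exists H4 NB Ce nac PC'.
have [k Lk] := calm_legal Ce cx.
apply/existsP; exists x; apply/existsP; exists k; rewrite Lk /=.
have u1 := unc_recolor k cx.
apply: (alice_main H4 NB (N := n)) => //.
- by apply: calm_recolor => //; exact/CalmLikeP.
- by move: u1; rewrite ue E => -[<-].
- by case: PC => [?|od]; [left | right; move: od; rewrite -ue u1 /=].
Qed.


Lemma notstuck_legal t (c : pcol T t) w : ~~ stuck e c -> c w = None -> exists k, legal e c w k.
Proof.
move=> NS cw; move/existsPn: NS => /(_ w); rewrite cw eqxx negb_forall /=.
by move=> /existsP [k]; rewrite negbK; exists k.
Qed.

Lemma I1_eq t (i j : 'I_t) : t <= 1 -> i = j.
Proof. move=> t1; case: i j => [i Hi] [j Hj]; apply: val_inj => /=; lia. Qed.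

Lemma lose01 t u v : t <= 1 -> e u v -> forall n a (c : pcol T t),
  c u = None \/ c v = None -> alice_wins_from e n a c = false.
Proof.
move=> t1 euv; have uv := edge_neq euv.
have nac : forall c : pcol T t, c u = None \/ c v = None -> ~~ all_colored c.
  by move=> c [H|H]; apply: (not_all_colored H).
have inv : forall (c : pcol T t) x k, c u = None \/ c v = None -> legal e c x k ->
    (recolor c x k) u = None \/ (recolor c x k) v = None.
  move=> c x k H /legalP [cx Hx]; rewrite !recolorE.
  case: (u =P x) => [E|ux]; case: (v =P x) => [E'|vx]; subst.
  - by rewrite eqxx in uv.
  - case cv: (c v) => [k0|]; last by right.
    by exfalso; apply: (Hx v euv); rewrite cv (I1_eq k0 k t1).
  - case cu: (c u) => [k0|]; last by left.
    by exfalso; apply: (Hx u); [rewrite e_sym | rewrite cu (I1_eq k0 k t1)].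
  - exact: H.
elim=> [|n IH] a c H.
  by rewrite aw0 (negbTE (nac c H)) andbF.
case: a.
- rewrite awSt (negbTE (nac c H)) /=; apply/negbTE; rewrite negb_and; apply/orP; right.
  apply/existsPn => x; apply/existsPn => k; rewrite negb_and.
  case L: (legal e c x k) => //=; by rewrite IH //; apply: inv.
- case: (boolP (stuck e c)) => [S|NS]; first exact: stuck_lose.
  have [w cw] := all_coloredP (nac c H).
  have [k L] := notstuck_legal NS cw.
  apply: (bob_move L); by rewrite IH //; apply: inv.
Qed.

Lemma lose01_game s u v : s <= 1 -> e u v -> ~~ alice_wins e s.
Proof.
move=> s1 euv; rewrite /alice_wins (lose01 s1 euv) //; left; by rewrite ffunE.
Qed.

Lemma edgeless_win : (forall u v, ~~ e u v) -> alice_wins e 1.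
Proof.
move=> NE.
have NS : forall c : pcol T 1, ~~ stuck e c.
  move=> c; apply/existsPn => w; rewrite negb_and negb_forall.
  case cw: (c w) => [k|] //=; apply/existsP; exists ord0; rewrite negbK.
  apply/legalP; split => // z ewz; by move: (NE w z); rewrite ewz.
have LG : forall (c : pcol T 1) w, c w = None -> legal e c w ord0.
  move=> c w cw; apply/legalP; split => // z ewz; by move: (NE w z); rewrite ewz.
suff : forall n a (c : pcol T 1), unc c <= n -> alice_wins_from e n a c.
  by apply; rewrite /unc; apply: max_card.
elim=> [|n IH] a c uc.
  by rewrite aw0 NS all_colored_unc /=; rewrite leqn0 in uc.
case: a; [rewrite awSt | rewrite awSf]; rewrite NS /=;
  (case: (boolP (all_colored c)) => //= nac; have [w cw] := all_coloredP nac).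
- apply/existsP; exists w; apply/existsP; exists ord0; rewrite LG //=.
  by apply: IH; move: uc; rewrite (unc_recolor ord0 cw).
- apply/forallP => x; apply/forallP => k; apply/implyP => /legalP [cx _].
  by apply: IH; move: uc; rewrite (unc_recolor k cx).
Qed.

Lemma bob_threat n (c : pcol T 2) x y z i : c x = Some i -> e x y -> c y = None ->
  e y z -> c z = None -> (forall s, e z s -> c s <> Some (flip i)) ->
  alice_wins_from e n false c = false.
Proof.
move=> cx exy cy eyz cz Hz.
have L : legal e c z (flip i) by apply/legalP.
apply: (bob_move' L); rewrite stuck_lose //.
apply: (stuck_of (y := y) (a := x) (b := z) (i := i) (j := flip i)); rewrite ?recolorE.
- by case: (y =P z) => [E|//]; subst; rewrite e_irr in eyz.
- by rewrite e_sym.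
- done.
- by case: (x =P z) => [E|//]; subst; rewrite cz in cx.
- by rewrite eqxx.
- by rewrite eq_sym flip_neq.
Qed.

Lemma first_threat n v g y z : e v y -> e y z -> z != v ->
  alice_wins_from e n false (recolor (empty_col T 2) v g) = false.
Proof.
move=> evy eyz zv.
apply: (@bob_threat n _ v y z g); rewrite ?recolorE ?ffunE ?eqxx //.
- by case: (y =P v) => [E|//]; subst; rewrite e_irr in evy.
- by rewrite (negbTE zv).
- move=> s _; rewrite recolorE ffunE; case: (s =P v) => // _ [] E; move: (flip_neq g); by rewrite -E eqxx.
Qed.


Lemma bob_config l1 l2 p q r : e l1 p -> e l2 p -> e p q -> e q r ->
  uniq [:: l1; l2; p; q; r] -> (forall s, e l2 s -> s = p) -> ~~ alice_wins e 2.
Proof.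
move=> el1p el2p epq eqr U l2only.
have [[[[[[[[[l1l2 l1p] l1q] l1r] l2p] l2q] l2r] pq] pr] qr] := uniq5 U.
have eqp : e q p by rewrite e_sym.
have epl1 : e p l1 by rewrite e_sym.
have erq : e r q by rewrite e_sym.
have nrl1 : ~~ e r l1.
  by apply/negP => H; apply: (cyc4 el1p epq eqr H).
have nql1 : ~~ e q l1 by apply/negP => H; apply: (cyc3 el1p epq H).
have nql2 : ~~ e q l2 by apply/negP => H; apply: (cyc3 el2p epq H).
rewrite /alice_wins; apply/negbT; apply: alice_lose.
  by apply: (not_all_colored (v := l1)); rewrite ffunE.
move=> v g Lv; apply/negbT.
case: (boolP [exists y, exists z, [&& e v y, e y z & z != v]]).
  move/existsP => [y /existsP [z /and3P [evy eyz zv]]]; exact: (first_threat _ g evy eyz zv).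
move/existsPn => H2'.
have H2 : forall y z, e v y -> e y z -> z = v.
  move=> y z evy eyz; apply/eqP; move: (H2' y) => /existsPn /(_ z).
  by rewrite evy eyz /= negbK.
have vl1 : v != l1 by apply/eqP => E; subst v; move: (H2 _ _ el1p epq) => E; rewrite E eqxx in l1q.
have vp : v != p by apply/eqP => E; subst v; move: (H2 _ _ epq eqr) => E; rewrite E eqxx in pr.
have vq : v != q by apply/eqP => E; subst v; move: (H2 _ _ eqp epl1) => E; rewrite E eqxx in l1q.
have vl2 : v != l2 by apply/eqP => E; subst v; move: (H2 _ _ el2p epq) => E; rewrite E eqxx in l2q.
have vr : v != r by apply/eqP => E; subst v; move: (H2 _ _ erq eqp) => E; rewrite E eqxx in pr.
have nvl1 : ~~ e v l1.
  by apply/negP => H; move: (H2 _ _ H el1p) => E; rewrite E eqxx in vp.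
have nvr : ~~ e v r.
  by apply/negP => H; move: (H2 _ _ H erq) => E; rewrite E eqxx in vq.
have nvq : ~~ e v q.
  by apply/negP => H; move: (H2 _ _ H eqp) => E; rewrite E eqxx in vp.
set c1 := recolor (empty_col T 2) v g.
have L1 : legal e c1 l1 g.
  apply/legalP; split; first by rewrite recolorE ffunE eq_sym (negbTE vl1).
  move=> s es; rewrite recolorE ffunE; case: (s =P v) => // E; subst s.
  by rewrite e_sym es in nvl1.
apply: (bob_move' L1); apply/negbT; apply: alice_lose.
  by apply: (not_all_colored (v := p)); rewrite !recolorE ffunE eq_sym (negbTE l1p) eq_sym (negbTE vp).
move=> w j Lw; apply/negbT.
have [c2w Hw] := legalP _ _ _ Lw.
set c3 := recolor (recolor c1 l1 g) w j.
have val3 : forall s, c3 s =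
   if s == w then Some j else if s == l1 then Some g else if s == v then Some g else None.
  by move=> s; rewrite /c3 /c1 !recolorE ffunE.
have none3 : forall s, s != w -> s != l1 -> s != v -> c3 s = None.
  by move=> s sw sl sv; rewrite val3 (negbTE sw) (negbTE sl) (negbTE sv).
have wl1 : w != l1 by apply/eqP => E; subst w; move: c2w; rewrite recolorE eqxx.
have wv : w != v.
  by apply/eqP => E; subst w; move: c2w; rewrite /c1 !recolorE (negbTE vl1) eqxx.
have g3 : forall s, c3 s = Some (flip g) -> s = w.
  move=> s; rewrite val3; case: (s =P w) => // _.
  by case: ifP => _; [move/Sflip | case: ifP => _ //; move/Sflip].
case: (w =P p) => [E|/eqP wp].
  subst w.
  have jg : j != g.
    apply/eqP => E; subst j; apply: (Hw l1); first by rewrite e_sym.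
    by rewrite recolorE eqxx.
  apply: (@bob_threat _ _ p q r j).
  - by rewrite val3 eqxx.
  - done.
  - by apply: none3; rewrite // eq_sym.
  - done.
  - by apply: none3; rewrite // eq_sym.
  - move=> s es; rewrite -(flip_of jg) val3.
    case: (s =P p) => [_ [] E|_]; first by rewrite E eqxx in jg.
    case: (s =P l1) => [E|_]; first by subst s; rewrite es in nrl1.
    case: (s =P v) => [E|_]; first by subst s; rewrite e_sym es in nvr.
    done.
case: (w =P l2) => [E|/eqP wl2].
  subst w.
  apply: (@bob_threat _ _ l1 p q g).
  - by rewrite val3 eq_sym (negbTE wl1) eqxx.
  - done.
  - by apply: none3; rewrite // eq_sym.
  - done.
  - by apply: none3; rewrite // eq_sym.
  - by move=> s es /g3 E; subst s; rewrite es in nql2.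
apply: (@bob_threat _ _ l1 p l2 g).
- by rewrite val3 eq_sym (negbTE wl1) eqxx.
- done.
- by apply: none3; rewrite // eq_sym.
- by rewrite e_sym.
- by apply: none3; rewrite // eq_sym.
- move=> s es /g3 E; subst s; move: (l2only w es) => E; by rewrite E eqxx in wp.
Qed.


Lemma p5_common a1 a2 a3 a4 a5 w : e a1 a2 -> e a2 a3 -> e a3 a4 -> e a4 a5 ->
  uniq [:: a1; a2; a3; a4; a5] -> e w a1 -> e w a5 -> False.
Proof.
move=> e12 e23 e34 e45 U ew1 ew5.
have [[[[[[[[[n12 n13] n14] n15] n23] n24] n25] n34] n35] n45] := uniq5 U.
case: (w =P a1) => [E|/eqP w1]; first by subst; rewrite e_irr in ew1.
case: (w =P a2) => [E|/eqP w2].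
  by subst; apply: (cyc4 e23 e34 e45); es.
case: (w =P a3) => [E|/eqP w3].
  by subst; apply: (cyc3 e12 e23 ew1).
case: (w =P a4) => [E|/eqP w4].
  by subst; apply: (cyc4 e12 e23 e34); es.
case: (w =P a5) => [E|/eqP w5]; first by subst; rewrite e_irr in ew5.
apply: (no_cycle (x := a1) (s := [:: a2; a3; a4; a5; w])) => //=.
- rewrite /= !inE !negb_or; neqs.
- by rewrite e12 e23 e34 e45 e_sym ew5.
Qed.

Lemma bob_P5 a1 a2 a3 a4 a5 : e a1 a2 -> e a2 a3 -> e a3 a4 -> e a4 a5 ->
  uniq [:: a1; a2; a3; a4; a5] -> ~~ alice_wins e 2.
Proof.
move=> e12 e23 e34 e45 U.
have [[[[[[[[[n12 n13] n14] n15] n23] n24] n25] n34] n35] n45] := uniq5 U.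
have e21 : e a2 a1 by rewrite e_sym.
have e32 : e a3 a2 by rewrite e_sym.
have e43 : e a4 a3 by rewrite e_sym.
have e54 : e a5 a4 by rewrite e_sym.
rewrite /alice_wins; apply/negbT; apply: alice_lose.
  by apply: (not_all_colored (v := a1)); rewrite ffunE.
move=> v g Lv; apply/negbT.
case: (boolP [exists y, exists z, [&& e v y, e y z & z != v]]).
  move/existsP => [y /existsP [z /and3P [evy eyz zv]]]; exact: (first_threat _ g evy eyz zv).
move/existsPn => H2'.
have H2 : forall y z, e v y -> e y z -> z = v.
  move=> y z evy eyz; apply/eqP; move: (H2' y) => /existsPn /(_ z).
  by rewrite evy eyz /= negbK.
have v1 : v != a1 by apply/eqP => E; subst v; move: (H2 _ _ e12 e23) => E; rewrite E eqxx in n13.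
have v2 : v != a2 by apply/eqP => E; subst v; move: (H2 _ _ e23 e34) => E; rewrite E eqxx in n24.
have v3 : v != a3 by apply/eqP => E; subst v; move: (H2 _ _ e32 e21) => E; rewrite E eqxx in n13.
have v4 : v != a4 by apply/eqP => E; subst v; move: (H2 _ _ e43 e32) => E; rewrite E eqxx in n24.
have v5 : v != a5 by apply/eqP => E; subst v; move: (H2 _ _ e54 e43) => E; rewrite E eqxx in n35.
have nv3 : ~~ e v a3 by apply/negP => H; move: (H2 _ _ H e32) => E; rewrite E eqxx in v2.
have nv1 : ~~ e v a1 by apply/negP => H; move: (H2 _ _ H e12) => E; rewrite E eqxx in v2.
have nv5 : ~~ e v a5 by apply/negP => H; move: (H2 _ _ H e54) => E; rewrite E eqxx in v4.
set c1 := recolor (empty_col T 2) v g.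
have L1 : legal e c1 a3 g.
  apply/legalP; split; first by rewrite recolorE ffunE eq_sym (negbTE v3).
  move=> s es; rewrite recolorE ffunE; case: (s =P v) => // E; subst s.
  by rewrite e_sym es in nv3.
apply: (bob_move' L1); apply/negbT; apply: alice_lose.
  by apply: (not_all_colored (v := a1)); rewrite !recolorE ffunE (negbTE n13) eq_sym (negbTE v1).
move=> w j Lw; apply/negbT.
have [c2w Hw] := legalP _ _ _ Lw.
set c3 := recolor (recolor c1 a3 g) w j.
have val3 : forall s, c3 s =
   if s == w then Some j else if s == a3 then Some g else if s == v then Some g else None.
  by move=> s; rewrite /c3 /c1 !recolorE ffunE.
have none3 : forall s, s != w -> s != a3 -> s != v -> c3 s = None.
  by move=> s sw sl sv; rewrite val3 (negbTE sw) (negbTE sl) (negbTE sv).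
have w3 : w != a3 by apply/eqP => E; subst w; move: c2w; rewrite recolorE eqxx.
have wv : w != v.
  by apply/eqP => E; subst w; move: c2w; rewrite /c1 !recolorE (negbTE v3) eqxx.
have g3 : forall s, c3 s = Some (flip g) -> s = w.
  move=> s; rewrite val3; case: (s =P w) => // _.
  by case: ifP => _; [move/Sflip | case: ifP => _ //; move/Sflip].
have c33 : c3 a3 = Some g by rewrite val3 eq_sym (negbTE w3) eqxx.
case: (boolP [|| w == a1, w == a2 | e w a1]) => HB.
- have w4 : w != a4.
    apply/eqP => E; subst w; move: HB; rewrite (eq_sym a4) (negbTE n14) (eq_sym a4) (negbTE n24) /= => H.
    by apply: (cyc4 e12 e23 e34).
  have w5 : w != a5.
    apply/eqP => E; subst w; move: HB; rewrite (eq_sym a5) (negbTE n15) (eq_sym a5) (negbTE n25) /= => H.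
    by apply: (cyc5 e12 e23 e34 e45).
  apply: (@bob_threat _ _ a3 a4 a5 g) => //.
  + by apply: none3; rewrite // eq_sym.
  + by apply: none3; rewrite // eq_sym.
  + move=> s es /g3 E; subst s.
    case/or3P: HB => [/eqP E|/eqP E|H].
    * by subst w; apply: (cyc5 e12 e23 e34 e45); rewrite // e_sym.
    * by subst w; apply: (cyc4 e23 e34 e45); rewrite // e_sym.
    * by apply: (p5_common e12 e23 e34 e45 U H); rewrite e_sym.
- move: HB; rewrite !negb_or => /and3P [w1 w2 nw1].
  apply: (@bob_threat _ _ a3 a2 a1 g) => //.
  + by apply: none3; rewrite // eq_sym.
  + by apply: none3; rewrite // eq_sym.
  + by move=> s es /g3 E; subst s; rewrite e_sym es in nw1.
Qed.


Lemma bob_parity p1 p2 p3 p4 : e p1 p2 -> e p2 p3 -> e p3 p4 -> uniq [:: p1; p2; p3; p4] ->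
  (forall s t, s \in [:: p1; p2; p3; p4] -> e s t -> t \in [:: p1; p2; p3; p4]) ->
  ~~ odd #|T| -> ~~ alice_wins e 2.
Proof.
move=> e12 e23 e34 U clo evT.
set C0 := [:: p1; p2; p3; p4].
have [[[[[n12 n13] n14] n23] n24] n34] := uniq4 U.
have e21 : e p2 p1 by rewrite e_sym.
have e32 : e p3 p2 by rewrite e_sym.
have e43 : e p4 p3 by rewrite e_sym.
have two : forall v, v \in C0 -> exists y z, [/\ e v y, e y z, z != v, y \in C0 & z \in C0].
  move=> v; rewrite !inE => /or4P [] /eqP ->.
  - by exists p2, p3; rewrite !inE !eqxx ?orbT eq_sym.
  - by exists p3, p4; rewrite !inE !eqxx ?orbT eq_sym.
  - by exists p2, p1; rewrite !inE !eqxx ?orbT.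
  - by exists p3, p2; rewrite !inE !eqxx ?orbT.
have cardC : #|[set s in C0]| = 4.
  by rewrite cardsE; apply/card_uniqP.
pose Inv (c : pcol T 2) := (forall s, s \in C0 -> c s = None) /\ ~~ odd (unc c).
have nac : forall c, Inv c -> ~~ all_colored c.
  by move=> c [H _]; apply: (not_all_colored (v := p1)); apply: H; rewrite inE eqxx.
suff : forall N n c, n <= N -> Inv c -> alice_wins_from e n true c = false.
  move=> H; rewrite /alice_wins (H #|T|) //; split; first by move=> s _; rewrite ffunE.
  rewrite /unc (_ : [set x | empty_col T 2 x == None] = setT) ?cardsT //.
  by apply/setP => x; rewrite !inE ffunE.
elim=> [|N IH] n c nN [Hc Hpar].
  by rewrite leqn0 in nN; move/eqP: nN => ->; rewrite aw0 (negbTE (nac c (conj Hc Hpar))) andbF.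
apply: alice_lose; first exact: (nac c (conj Hc Hpar)).
move=> v k L; apply/negbT.
have [cv _] := legalP _ _ _ L.
set c1 := recolor c v k.
case: (boolP (v \in C0)) => vin.
  have [y [z [evy eyz zv yin zin]]] := two v vin.
  apply: (@bob_threat _ _ v y z k).
  - by rewrite recolorE eqxx.
  - done.
  - by rewrite recolorE; case: (y =P v) => [E|_]; [subst; rewrite e_irr in evy | apply: Hc].
  - done.
  - by rewrite recolorE (negbTE zv); apply: Hc.
  - move=> s ezs; rewrite recolorE; case: (s =P v) => [_|_]; first exact: Sflip.
    by rewrite Hc //; apply: (clo z).
have u1 := unc_recolor k cv; rewrite -/c1 in u1.
have Hc1 : forall s, s \in C0 -> c1 s = None.
  by move=> s sin; rewrite recolorE; case: (s =P v) => [E|_]; [subst; rewrite sin in vin | apply: Hc].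
case: (boolP (stuck e c1)) => [S|NS]; first exact: stuck_lose.
have [t [c1t tC]] : exists t, c1 t = None /\ t \notin C0.
  set U1 := [set s | c1 s == None].
  have sub : [set s in C0] \subset U1.
    by apply/subsetP => s; rewrite in_set => sin; rewrite in_set Hc1.
  have : 0 < #|U1 :\: [set s in C0]|.
    rewrite (cardsDS sub) cardC.
    have : odd (unc c1) by move: Hpar; rewrite u1 /= negbK.
    have : 4 <= unc c1 by rewrite -cardC /unc; apply: subset_leq_card.
    rewrite /unc -/U1; move: #|U1| => m; case: m => [|[|[|[|[|m]]]]] //.
  rewrite card_gt0 => /set0Pn [t]; rewrite in_setD !in_set => /andP [tn /eqP ct].
  by exists t; split.
have [k' L'] := notstuck_legal NS c1t.
apply: (bob_move' L'); apply/negbT.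
have u2 := unc_recolor k' c1t.
apply: (IH n.-1.-1).
- by move: nN; case: n => [|[|n]] //=; rewrite ltnS; apply: ltnW.
- split.
  + move=> s sin; rewrite recolorE; case: (s =P t) => [E|_]; last exact: Hc1.
    by subst; rewrite sin in tC.
  + by move: Hpar; rewrite u1 u2 /= negbK.
Qed.


Lemma has_path_le j k : has_path_of_length e k -> j <= k -> has_path_of_length e j.
Proof.
move=> [x [p [sz pth u]]] jk; exists x, (take j p); split.
- by rewrite size_takel // sz.
- exact: take_path.
- by have := take_uniq j.+1 u.
Qed.

Lemma has4 : has_path_of_length e 4 -> exists a1 a2 a3 a4 a5,
  [/\ e a1 a2, e a2 a3, e a3 a4, e a4 a5 & uniq [:: a1; a2; a3; a4; a5]].
Proof.
move=> [x [[|b [|c [|d [|f [|? ?]]]]] [//= _ /and5P [? ? ? ? _] u]]].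
by exists x, b, c, d, f.
Qed.

Lemma has3 : has_path_of_length e 3 -> exists a1 a2 a3 a4,
  [/\ e a1 a2, e a2 a3, e a3 a4 & uniq [:: a1; a2; a3; a4]].
Proof.
move=> [x [[|b [|c [|d [|? ?]]]] [//= _ /and4P [? ? ? _] u]]].
by exists x, b, c, d.
Qed.

Lemma has1 : has_path_of_length e 1 -> exists a b, e a b.
Proof. by move=> [x [[|b [|? ?]] [//= _ /andP [? _] _]]]; exists x, b. Qed.

Lemma edge_has1 a b : e a b -> has_path_of_length e 1.
Proof.
move=> eab; exists a, [:: b]; split => //=; first by rewrite eab.
by rewrite inE andbT; apply: edge_neq.
Qed.

Lemma noP4_of : ~ has_path_of_length e 4 -> noP4.
Proof.
move=> H a b c d f eab ebc ecd edf u; apply: H; exists a, [:: b; c; d; f]; split => //=.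
by rewrite eab ebc ecd edf.
Qed.

Lemma noP3_of : ~ has_path_of_length e 3 -> noP3.
Proof.
move=> H a b c d eab ebc ecd u; apply: H; exists a, [:: b; c; d]; split => //=.
by rewrite eab ebc ecd.
Qed.

Lemma longest_of k : has_path_of_length e k -> ~ has_path_of_length e k.+1 ->
  longest_path_length_is e k.
Proof.
move=> Hk Hk1; split => // m Hm; rewrite leqNgt; apply/negP => km.
by apply: Hk1; apply: (has_path_le Hm).
Qed.

Lemma exit_edge (A : pred T) x z : connect e x z -> x \in A -> z \notin A ->
  exists a b, [/\ a \in A, b \notin A & e a b].
Proof.
move/connectP => [p pth ->]; elim: p x pth => [|y p IH] x /= pth xA zA.
  by rewrite xA in zA.
move/andP: pth => [exy pth].
case: (boolP (y \in A)) => yA; first exact: (IH y).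
by exists x, y.
Qed.

Lemma fifth_vertex (H4 : noP4) q1 q2 q3 q4 z : e q1 q2 -> e q2 q3 -> e q3 q4 ->
  uniq [:: q1; q2; q3; q4] -> connect e q1 z -> z \notin [:: q1; q2; q3; q4] ->
  ~~ alice_wins e 2.
Proof.
move=> e12 e23 e34 U cz zn.
have [[[[[n12 n13] n14] n23] n24] n34] := uniq4 U.
have [a [b [ain bn eab]]] := exit_edge cz (mem_head _ _) zn.
move: bn; rewrite !inE !negb_or => /and4P [b1 b2 b3 b4].
have bp : forall c, e c b -> c \in [:: q1; q2; q3; q4] -> c = a \/ True by right.
move: ain; rewrite !inE => /or4P [] /eqP E; subst a.
- exfalso; apply: (H4 b q1 q2 q3 q4); es.
  rewrite /= !inE !negb_or; neqs.
- apply: (@bob_config q1 b q2 q3 q4) => //; first by rewrite e_sym.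
    rewrite /= !inE !negb_or; neqs.
  move=> s ebs; apply/eqP; apply/negP => /negP sq2.
  case: (s =P q1) => [E|/eqP s1]; first by subst; apply: (cyc3 e12 eab); es.
  case: (s =P q3) => [E|/eqP s3]; first by subst; apply: (cyc3 e23 (b := q3) (c := b)); es.
  case: (s =P q4) => [E|/eqP s4].
    by subst; apply: (cyc4 e23 e34 (d := b)); es.
  apply: (H4 s b q2 q3 q4); es.
  have sb := edge_neq ebs.
  rewrite /= !inE !negb_or; neqs.
- apply: (@bob_config q4 b q3 q2 q1) => //; es.
    rewrite /= !inE !negb_or; neqs.
  move=> s ebs; apply/eqP; apply/negP => /negP sq3.
  case: (s =P q4) => [E|/eqP s4]; first by subst; apply: (cyc3 e34 (b := q4) (c := b)); es.
  case: (s =P q2) => [E|/eqP s2]; first by subst; apply: (cyc3 e23 (b := q3) (c := b)); es.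
  case: (s =P q1) => [E|/eqP s1].
    by subst; apply: (cyc4 e12 e23 (d := b)); es.
  apply: (H4 s b q3 q2 q1); es.
  have sb := edge_neq ebs.
  rewrite /= !inE !negb_or; neqs.
- exfalso; apply: (H4 q1 q2 q3 q4 b) => //.
  rewrite /= !inE !negb_or; neqs.
Qed.


Lemma dl_edge a b : e a b -> dist_le e a b 1.
Proof. by move=> eab; exists [:: b]; rewrite /= eab. Qed.

Lemma dl_refl a : dist_le e a a 0.
Proof. by exists [::]. Qed.

Lemma dl_cat a b c m n : dist_le e a b m -> dist_le e b c n -> dist_le e a c (m + n).
Proof.
move=> [p [sp pp lp]] [q [sq pq lq]]; exists (p ++ q); split.
- by rewrite size_cat leq_add.
- by rewrite cat_path pp lp.
- by rewrite last_cat lp.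
Qed.

Lemma dl_mono a b m n : dist_le e a b m -> m <= n -> dist_le e a b n.
Proof. by move=> [p [sp pp lp]] mn; exists p; split => //; apply: leq_trans mn. Qed.

Lemma comp_closed y t s : t \in component e y -> e t s -> s \in component e y.
Proof. by rewrite !inE => yt ets; apply: connect_trans yt (connect1 ets). Qed.

Lemma bds_contra (H4 : noP4)
  (PC : forall C, is_component e C -> diameter_is e C 3 -> induces_path e C) : noBDS.
Proof.
move=> y w x1 x2 w' eyw eyx1 eyx2 eww' x12 x1w x2w w'y.
have yw := edge_neq eyw; have ww' := edge_neq eww'; have yx1 := edge_neq eyx1.
have ewy : e w y by rewrite e_sym.
have x1w' : x1 != w'.
  by apply/eqP => E; subst; apply: (cyc3 eyw eww'); rewrite e_sym.
set C := component e y.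
pose A t := [|| t == y, t == w, e t y | e t w].
have clo : forall t s, A t -> e t s -> A s.
  move=> t s At ets; rewrite /A.
  case: (s =P y) => //= /eqP sy; case: (s =P w) => //= /eqP sw.
  case: (boolP (e s y)) => //= nsy; case: (boolP (e s w)) => //= nsw.
  have ts := edge_neq ets.
  move: At; rewrite /A; case/or4P => [/eqP E|/eqP E|ety|etw]; subst.
  - by rewrite e_sym ets in nsy.
  - by rewrite e_sym ets in nsw.
  - case: (t =P w) => [E|/eqP tw]; first by subst; rewrite e_sym ets in nsw.
    have sw' : s != w'.
      by apply/eqP => E; subst; apply: (cyc4 ety eyw eww'); es.
    have tw' : t != w'.
      by apply/eqP => E; subst; apply: (cyc3 ety eyw eww').
    have ty := edge_neq ety.
    exfalso; apply: (H4 s t y w w'); es.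
    rewrite /= !inE !negb_or; neqs.
  - case: (t =P y) => [E|/eqP ty]; first by subst; rewrite e_sym ets in nsy.
    have sx1 : s != x1.
      by apply/eqP => E; subst; apply: (cyc4 etw ewy eyx1); es.
    have tx1 : t != x1.
      by apply/eqP => E; subst; apply: (cyc3 eyx1 etw ewy).
    have tw := edge_neq etw.
    exfalso; apply: (H4 s t w y x1); es.
    rewrite /= !inE !negb_or; neqs.
have CA : forall t, t \in C -> A t.
  have gen : forall p z, A z -> path e z p -> A (last z p).
    elim=> [|a p IH] z //= Az /andP [eza pth]; apply: IH pth; exact: clo Az eza.
  move=> t; rewrite inE => /connectP [p pth ->]; apply: gen pth; by rewrite /A eqxx.
have yC : y \in C by rewrite inE connect0.
have nbC : forall t, e y t -> t \in C by move=> t eyt; apply: (comp_closed yC eyt).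
have wC := nbC w eyw.
have side : forall t, A t -> (dist_le e t y 1 /\ dist_le e y t 1) \/ (dist_le e t w 1 /\ dist_le e w t 1).
  move=> t; case/or4P => [/eqP ->|/eqP ->|ety|etw].
  - by left; split; apply: dl_mono (dl_refl _) _.
  - by right; split; apply: dl_mono (dl_refl _) _.
  - by left; split; apply: dl_edge; rewrite // e_sym.
  - by right; split; apply: dl_edge; rewrite // e_sym.
have [s [us Cs adj]] : induces_path e C.
  apply: PC; first by exists y.
  split; [|split] => //.
  - move=> u1 u2 /CA A1 /CA A2.
    case: (side _ A1) => [[d1 _]|[d1 _]]; case: (side _ A2) => [[_ d2]|[_ d2]].
    + by apply: dl_mono (dl_cat d1 d2) _.
    + by apply: (dl_cat (dl_cat d1 (dl_edge eyw)) d2).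
    + by apply: (dl_cat (dl_cat d1 (dl_edge ewy)) d2).
    + by apply: dl_mono (dl_cat d1 d2) _.
  - exists x1, w'; split; [exact: nbC | exact: (comp_closed wC eww') |].
    move=> [[|m [|m2 [|? ?]]] [//= _ pth lst]].
    + by subst; apply: (cyc3 eyw eww'); rewrite e_sym.
    + move: pth => /= /andP [ex1m _]; subst m.
      by apply: (cyc4 (a := x1) (b := y) (c := w) (d := w')); es.
    + move: pth => /= /and3P [ex1m emm2 _]; subst m2.
      case: (m =P y) => [E|/eqP my]; first by subst; apply: (cyc3 eyw eww'); rewrite e_sym.
      case: (m =P w) => [E|/eqP mw]; first by subst; apply: (cyc3 eyw (b := w) (c := x1)); es.
      have mx1 := edge_neq ex1m; have mw' := edge_neq emm2.
      apply: (H4 m x1 y w w'); es.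
      rewrite /= !inE !negb_or; neqs.
have x1C := nbC x1 eyx1; have x2C := nbC x2 eyx2.
have ins : forall t, t \in C -> t \in s by move=> t; rewrite Cs.
have idx_neq : forall a b, a \in C -> b \in C -> a != b -> index a s != index b s.
  move=> a b aC bC; apply: contraNneq => E.
  by rewrite -(nth_index a (ins a aC)) E nth_index // ins.
have h1 := esym (adj y x1 yC x1C); rewrite eyx1 in h1.
have h2 := esym (adj y x2 yC x2C); rewrite eyx2 in h2.
have h3 := esym (adj y w yC wC); rewrite eyw in h3.
have d12 := idx_neq _ _ x1C x2C x12.
have d1w := idx_neq _ _ x1C wC x1w.
have d2w := idx_neq _ _ x2C wC x2w.
exact: (three_nb h1 h2 h3 d12 d1w d2w).
Qed.


Lemma bds_of_noP3 : noP3 -> noBDS.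
Proof.
move=> P3 y w x1 x2 w' eyw eyx1 eyx2 eww' x12 x1w x2w w'y.
have yw := edge_neq eyw; have ww' := edge_neq eww'; have yx1 := edge_neq eyx1.
have x1w' : x1 != w'.
  by apply/eqP => E; subst; apply: (cyc3 eyw eww'); rewrite e_sym.
apply: (P3 x1 y w w'); es.
rewrite /= !inE !negb_or; neqs.
Qed.

End Game.


Theorem theorem4p3 (T : finType) (e : rel T)
    (e_sym : symmetric e) (e_irr : irreflexive e) (F_forest : is_forest e) :
  game_chromatic_number_is e 2 <->
  ((exists k, [/\ 1 <= k, k <= 2 & longest_path_length_is e k]) \/
   [/\ longest_path_length_is e 3, odd #|T| &
       forall C : {set T}, is_component e C -> diameter_is e C 3 ->
         induces_path e C]).
Proof.
have es : forall a b, e a b -> e b a by move=> a b; rewrite e_sym.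
split.
- move=> [W2 N01].
  have N1 := N01 1 (erefl _).
  have [u [v euv]] : exists u v, e u v.
    case: (boolP [exists u, exists v, e u v]) => [/existsP [u /existsP [v H]]|/existsPn H].
      by exists u, v.
    exfalso; move/negP: N1; apply; apply: edgeless_win => a b.
    by move: (H a) => /existsPn.
  have H1 := edge_has1 e_irr euv.
  case: (Classical_Prop.classic (has_path_of_length e 4)) => [P4|nP4].
    have [a1 [a2 [a3 [a4 [a5 [? ? ? ? U]]]]]] := has4 P4.
    by move: W2; rewrite (negbTE (bob_P5 e_sym e_irr F_forest _ _ _ _ U)).
  have H4 := noP4_of nP4.
  case: (Classical_Prop.classic (has_path_of_length e 3)) => [P3|nP3]; last first.
    left; case: (Classical_Prop.classic (has_path_of_length e 2)) => [P2|nP2].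
      by exists 2; split => //; apply: longest_of.
    by exists 1; split => //; apply: longest_of.
  right; split.
  + exact: longest_of.
  + case: (boolP (odd #|T|)) => // ev; exfalso.
    have [q1 [q2 [q3 [q4 [e12 e23 e34 U]]]]] := has3 P3.
    case: (boolP [exists z, connect e q1 z && (z \notin [:: q1; q2; q3; q4])]).
      move/existsP => [z /andP [cz zn]].
      by move: W2; rewrite (negbTE (fifth_vertex e_sym e_irr F_forest H4 e12 e23 e34 U cz zn)).
    move/existsPn => Hz.
    have clo : forall s t, s \in [:: q1; q2; q3; q4] -> e s t -> t \in [:: q1; q2; q3; q4].
      move=> s t sin est.
      have cs : connect e q1 s.
        move: sin; rewrite !inE => /or4P [] /eqP ->.
        - exact: connect0.
        - exact: connect1.
        - exact: connect_trans (connect1 e12) (connect1 e23).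
        - exact: connect_trans (connect_trans (connect1 e12) (connect1 e23)) (connect1 e34).
      have ct : connect e q1 t := connect_trans cs (connect1 est).
      by move: (Hz t); rewrite ct /= negbK.
    by move: W2; rewrite (negbTE (bob_parity e_sym e_irr e12 e23 e34 U clo ev)).
  + move=> C [v0 ->] [Hall [[u1 [w1 [u1C w1C nd]]] _]].
    have [p [sp pth lst]] := Hall u1 w1 u1C w1C.
    have nd' : forall q : seq T, size q <= 2 -> path e u1 q -> last u1 q = w1 -> False.
      by move=> q sq pq lq; apply: nd; exists q.
    case: p sp pth lst => [|a [|b [|c [|? ?]]]] //= sp pth lst.
    * by exfalso; apply: (nd' [::]).
    * by exfalso; apply: (nd' [:: a]).
    * by exfalso; apply: (nd' [:: a; b]).
    subst c; move: pth => /and4P [eu1a eab ebw1 _].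
    have u1a := edge_neq e_irr eu1a; have ab := edge_neq e_irr eab; have bw1 := edge_neq e_irr ebw1.
    have u1b : u1 != b.
      by apply/eqP => E; subst; apply: (nd' [:: w1]) => //=; rewrite ebw1.
    have aw1 : a != w1.
      by apply/eqP => E; subst; apply: (nd' [:: w1]) => //=; rewrite eu1a.
    have u1w1 : u1 != w1 by apply/eqP => E; subst; apply: (nd' [::]).
    have U : uniq [:: u1; a; b; w1].
      by rewrite /= !inE !negb_or u1a u1b u1w1 ab aw1 bw1.
    case: (boolP [exists z, connect e u1 z && (z \notin [:: u1; a; b; w1])]).
      move/existsP => [z /andP [cz zn]].
      by move: W2; rewrite (negbTE (fifth_vertex e_sym e_irr F_forest H4 eu1a eab ebw1 U cz zn)).
    move/existsPn => Hz.
    have symc := sym_connect_sym e_sym.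
    have inS : forall t, connect e u1 t -> t \in [:: u1; a; b; w1].
      by move=> t ct; move: (Hz t); rewrite ct /= negbK.
    have cv0u1 : connect e v0 u1 by move: u1C; rewrite inE.
    have Ceq : component e v0 =i [:: u1; a; b; w1].
      move=> t; rewrite inE; apply/idP/idP => [cvt|].
        by apply: inS; rewrite symc in cv0u1; apply: connect_trans cv0u1 cvt.
      rewrite !inE => /or4P [] /eqP -> //.
      - exact: connect_trans cv0u1 (connect1 eu1a).
      - exact: connect_trans (connect_trans cv0u1 (connect1 eu1a)) (connect1 eab).
      - exact: connect_trans (connect_trans (connect_trans cv0u1 (connect1 eu1a)) (connect1 eab)) (connect1 ebw1).
    exists [:: u1; a; b; w1]; split => // x y.
    have n1 : e u1 b = false.
      by apply/negP => H; apply: (cyc3 e_irr F_forest eu1a eab (es _ _ H)).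
    have n2 : e a w1 = false.
      by apply/negP => H; apply: (cyc3 e_irr F_forest eab ebw1 (es _ _ H)).
    have n3 : e u1 w1 = false.
      apply/negP => H; apply: (cyc4 e_irr F_forest eu1a eab ebw1 (es _ _ H)) => //.
    have [[[[[d1 d2] d3] d4] d5] d6] := uniq4 U.
    rewrite !Ceq !inE => /or4P [] /eqP -> /or4P [] /eqP ->;
      rewrite /= ?eqxx ?e_irr ?(eq_sym a u1) ?(eq_sym b u1) ?(eq_sym w1 u1) ?(eq_sym b a)
        ?(eq_sym w1 a) ?(eq_sym w1 b) ?(negbTE d1) ?(negbTE d2) ?(negbTE d3) ?(negbTE d4)
        ?(negbTE d5) ?(negbTE d6) //=;
      rewrite ?eu1a ?eab ?ebw1 ?(es _ _ eu1a) ?(es _ _ eab) ?(es _ _ ebw1) ?n1 ?n2 ?n3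
        ?(e_sym b u1) ?(e_sym w1 a) ?(e_sym w1 u1) ?n1 ?n2 ?n3 //.
- move=> H; split.
  + case: H => [[k [k1 k2 [Hk Hmax]]]|[[H3 Hmax] odT Hpc]].
    * have nP3 : ~ has_path_of_length e 3.
        by move=> P3; move: (leq_trans (Hmax 3 P3) k2).
      have H4 : noP4 e.
        by apply: noP4_of => P4; apply: nP3; apply: (has_path_le P4).
      have P3 := noP3_of nP3.
      apply: (alice_wins2 e_sym e_irr F_forest H4) => //.
      - exact: bds_of_noP3 e_sym e_irr F_forest P3.
      - by left.
    * have H4 : noP4 e by apply: noP4_of => P4; move: (Hmax 4 P4).
      apply: (alice_wins2 e_sym e_irr F_forest H4) => //.
      - exact: bds_contra e_sym e_irr F_forest H4 Hpc.
      - by right.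
  + move=> s s2.
    have H1 : has_path_of_length e 1.
      case: H => [[k [k1 k2 [Hk _]]]|[[H3 _] _ _]]; first exact: has_path_le Hk k1.
      exact: has_path_le H3 _.
    have [a [b eab]] := has1 H1.
    exact: lose01_game e_sym e_irr s a b s2 eab.
Qed.
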